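(* Let $0<p<2$. For each $N\ge 2$ let $X_N=\{x_1,\dots,x_N\}\in S(N,2)$ be a minimizer of $\mathrm{FP}_{p,N,2}$ over $S(N,2)$, and regard $X_N$ as the $2\times N$ matrix whose columns are $x_1,\dots,x_N$. Then $$\lim_{N\to\infty}\frac{1}{N}X_NX_N^T=\frac{1}{2}I_2.$$ In particular, $\|X_NX_N^T-\frac{N}{2}I_2\|=o(N)$ as $N\to\infty$.
   Context: $S(N,2)$ denotes the collection of all ordered multisets of $N$ unit-norm vectors in $\mathbb{R}^2$, and for $0<p<\infty$, $\mathrm{FP}_{p,N,2}(X)=\sum_{k=1}^N\sum_{\ell\neq k}|\langle x_k,x_\ell\rangle|^p$. $I_2$ is the $2\times 2$ identity matrix. *)

(* Defs.v *)
From HB Require Import structures.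
From mathcomp Require Import all_boot all_order all_algebra.
From mathcomp Require Import all_classical all_reals all_analysis.
Set Implicit Arguments. Unset Strict Implicit. Unset Printing Implicit Defensive.
Import Order.TTheory GRing.Theory Num.Theory.
Import numFieldNormedType.Exports.
Local Open Scope ring_scope.

Definition colinner (R : realType) (N : nat) (X : 'M[R]_(2, N)) (k l : 'I_N) : R :=
  \sum_(i < 2) X i k * X i l.

Definition colnorm (R : realType) (N : nat) (X : 'M[R]_(2, N)) (k : 'I_N) : R :=
  Num.sqrt (colinner X k k).

Definition S_N2 (R : realType) (N : nat) : set 'M[R]_(2, N) :=
  [set X | forall k : 'I_N, colnorm X k = 1].

Definition FP (R : realType) (p : R) (N : nat) (X : 'M[R]_(2, N)) : R :=
  \sum_(k < N) \sum_(l < N | l != k) (`|colinner X k l| `^ p).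

Definition FP_minimizer (R : realType) (p : R) (N : nat) (X : 'M[R]_(2, N)) : Prop :=
  @S_N2 R N X /\ (forall Y : 'M[R]_(2, N), @S_N2 R N Y -> FP p X <= FP p Y).

(* Main.v *)
Require Import Defs.
From HB Require Import structures.
From mathcomp Require Import all_boot all_order all_algebra.
From mathcomp Require Import all_classical all_reals all_analysis.
From mathcomp Require Import ring lra.
Import Order.TTheory GRing.Theory Num.Theory.
Import numFieldNormedType.Exports.
Local Open Scope classical_set_scope.
Local Open Scope ring_scope.

Section Aux.
Set Implicit Arguments.
Variable R : realType.

Definition sM (N : nat) (X : 'M[R]_(2, N)) (i j : 'I_2) : R :=
  \sum_(k < N) X i k * X j k.
Arguments sM {N}.

Lemma sum2 (f : 'I_2 -> R) : \sum_(i < 2) f i = f 0 + f 1.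
Proof. rewrite big_ord_recl big_ord1; congr (_ + f _); exact: val_inj. Qed.

Lemma sumsq N (X : 'M[R]_(2, N)) :
  \sum_(k < N) \sum_(l < N) colinner X k l ^+ 2 =
  sM X 0 0 ^+ 2 + sM X 1 1 ^+ 2 + 2 * sM X 0 1 ^+ 2.
Proof.
rewrite /sM !expr2 !big_distrlr /= big_distrr /= -!big_split /=.
apply: eq_bigr => k _; rewrite big_distrr /= -!big_split /=.
apply: eq_bigr => l _; rewrite /colinner sum2; ring.
Qed.

Lemma unit_inner N (X : 'M[R]_(2, N)) k : S_N2 X -> colinner X k k = 1.
Proof.
move=> /(_ k); rewrite /colnorm => h.
have ge0 : 0 <= colinner X k k.
  by rewrite /colinner sum2 addr_ge0 // -expr2 sqr_ge0.
by rewrite -(sqr_sqrtr ge0) h expr1n.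
Qed.

Lemma trace_sM N (X : 'M[R]_(2, N)) : S_N2 X -> sM X 0 0 + sM X 1 1 = N%:R.
Proof.
move=> hX; rewrite /sM -big_split /=.
rewrite (eq_bigr (fun => 1)); first by rewrite sumr_const card_ord.
by move=> k _; rewrite -(unit_inner k hX) /colinner sum2.
Qed.

Lemma inner_le1 N (X : 'M[R]_(2, N)) k l : S_N2 X -> colinner X k l ^+ 2 <= 1.
Proof.
move=> hX; have hk := unit_inner k hX; have hl := unit_inner l hX.
move: hk hl; rewrite /colinner !sum2 => hk hl.
have h0 : 0 <= (X 0 k * X 1 l - X 1 k * X 0 l) ^+ 2 by apply: sqr_ge0.
nra.
Qed.

Lemma pow_ge_sq (p c : R) : 0 < p -> p < 2 -> c ^+ 2 <= 1 -> c ^+ 2 <= `|c| `^ p.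
Proof.
move=> p0 p2 c1.
have [->|cn0] := eqVneq c 0.
  by rewrite normr0 powR0 ?gt_eqF // expr0n.
have a0 : 0 < `|c| by rewrite normr_gt0.
have a1 : `|c| <= 1.
  have hc2 : `|c| ^+ 2 = c ^+ 2 by rewrite real_normK ?num_real.
  nra.
rewrite -real_normK ?num_real // -powR_mulrn; last exact: ltW.
apply: ger_powR; first by rewrite a0 a1.
by rewrite ltW.
Qed.

Lemma FP_lower p N (X : 'M[R]_(2, N)) : 0 < p -> p < 2 -> S_N2 X ->
  sM X 0 0 ^+ 2 + sM X 1 1 ^+ 2 + 2 * sM X 0 1 ^+ 2 <= FP p X + N%:R.
Proof.
move=> p0 p2 hX; rewrite -sumsq /FP.
have -> : (N%:R : R) = \sum_(k < N) 1 by rewrite sumr_const card_ord.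
rewrite -big_split /=; apply: ler_sum => k _.
rewrite (bigD1 k) //= unit_inner // expr1n addrC lerD2r.
by apply: ler_sum => l _; apply: pow_ge_sq => //; apply: inner_le1.
Qed.


Definition Ymx N : 'M[R]_(2, N) := \matrix_(i < 2, k < N) ((i : nat) == odd k)%:R.

Lemma Y_inner N (k l : 'I_N) : colinner (Ymx N) k l = (odd k == odd l)%:R.
Proof. by rewrite /colinner sum2 !mxE; case: (odd k); case: (odd l); rewrite /= ?mulr0 ?mul0r ?mulr1 ?addr0 ?add0r. Qed.

Lemma Y_S N : S_N2 (Ymx N).
Proof. by move=> k; rewrite /colnorm Y_inner eqxx sqrtr1. Qed.

Lemma Y_FP p N : 0 < p ->
  FP p (Ymx N) + N%:R = sM (Ymx N) 0 0 ^+ 2 + sM (Ymx N) 1 1 ^+ 2 + 2 * sM (Ymx N) 0 1 ^+ 2.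
Proof.
move=> p0; rewrite -sumsq /FP.
have -> : (N%:R : R) = \sum_(k < N) 1 by rewrite sumr_const card_ord.
rewrite -big_split /=; apply: eq_bigr => k _.
rewrite [in RHS](bigD1 k) //= Y_inner eqxx expr1n addrC; congr (_ + _).
apply: eq_bigr => l _; rewrite Y_inner.
by case: (odd k == odd l); rewrite ?normr1 ?powR1 ?expr1n ?normr0 ?powR0 ?gt_eqF // expr0n.
Qed.

Lemma Y_off N : sM (Ymx N) 0 1 = 0.
Proof.
rewrite /sM big1 // => k _; rewrite !mxE.
by case: (odd k); rewrite /= ?mulr0 ?mul0r.
Qed.

Lemma alt_sum N : \sum_(k < N) (if odd k then -1 else 1 : R) = (odd N)%:R.
Proof.
elim: N => [|N IH]; first by rewrite big_ord0.
rewrite big_ord_recr /= IH; case: (odd N) => /=; lra.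
Qed.

Lemma Y_diff N : (sM (Ymx N) 0 0 - sM (Ymx N) 1 1) ^+ 2 <= 1.
Proof.
have -> : sM (Ymx N) 0 0 - sM (Ymx N) 1 1 = (odd N)%:R.
  rewrite /sM -sumrB -alt_sum; apply: eq_bigr => k _; rewrite !mxE.
  by case: (odd k); rewrite /= ?mulr0 ?mul0r ?mulr1; lra.
by case: (odd N); rewrite /= ?expr1n ?expr0n.
Qed.

Lemma key p N (X : 'M[R]_(2, N)) : 0 < p -> p < 2 -> FP_minimizer p X ->
  (sM X 0 0 - sM X 1 1) ^+ 2 + 4 * sM X 0 1 ^+ 2 <= 1.
Proof.
move=> p0 p2 [hX hmin].
have A := @FP_lower p N X p0 p2 hX.
have B := @Y_FP p N p0.
have C := hmin _ (@Y_S N).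
have D := trace_sM hX.
have E := trace_sM (@Y_S N).
have F := @Y_diff N.
rewrite Y_off in B.
move: A B C D E F.
move: (sM X 0 0) (sM X 1 1) (sM X 0 1) (sM (Ymx N) 0 0) (sM (Ymx N) 1 1) (FP p X) (FP p (Ymx N)).
move=> s t u s' t' a b A B C D E F.
have Dt : t = N%:R - s by lra.
have Et : t' = N%:R - s' by lra.
rewrite Dt in A *; rewrite Et in B F.
nra.
Qed.


Lemma ord2 (i : 'I_2) : i = 0 \/ i = 1.
Proof. by case: i => [[|[|//]] hi]; [left|right]; apply: val_inj. Qed.

Lemma Dbound p N (X : 'M[R]_(2, N)) : 0 < p -> p < 2 -> FP_minimizer p X ->
  `|X *m X^T - (N%:R / 2 : R)%:M| <= 2^-1.
Proof.
move=> p0 p2 hm.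
have K := key p0 p2 hm.
have D := trace_sM hm.1.
have E : forall i j, (X *m X^T) i j = sM X i j.
  by move=> i j; rewrite mxE /sM; apply: eq_bigr => k _; rewrite mxE.
have S10 : sM X 1 0 = sM X 0 1 by rewrite /sM; apply: eq_bigr => k _; rewrite mulrC.
have H : forall i j, `|(X *m X^T - (N%:R / 2 : R)%:M) i j| <= 2^-1.
  move=> i j; rewrite mxE E !mxE.
  have hu : sM X 0 1 ^+ 2 <= 4^-1.
    have := sqr_ge0 (sM X 0 0 - sM X 1 1); lra.
  case: (ord2 i) => ->; case: (ord2 j) => -> /=; rewrite ?S10 /= ?mulr1n ?mulr0n ?subr0;
   rewrite ler_norml; apply/andP; split; nra.
change (mx_norm (X *m X^T - (N%:R / 2 : R)%:M) <= 2^-1).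
by rewrite mx_normrE; apply: bigmax_le => //; move=> ij _; apply: H.
Qed.

End Aux.

Theorem theorem3p2 (R : realType) (p : R) (hp0 : 0 < p) (hp2 : p < 2)
  (X : forall N : nat, 'M[R]_(2, N))
  (hX : forall N : nat, (2 <= N)%N -> FP_minimizer p (X N)) :
  ((fun N : nat => N%:R^-1 *: (X N *m (X N)^T)) @ \oo --> (2^-1 : R)%:M)
  /\
  ((fun N : nat => X N *m (X N)^T - (N%:R / 2 : R)%:M) =o_\oo (fun N : nat => N%:R : R)).
Proof.
have B : forall N, (2 <= N)%N -> `|X N *m (X N)^T - (N%:R / 2 : R)%:M| <= 2^-1.
  by move=> N hN; apply: (Dbound hp0 hp2 (hX N hN)).
split.
- apply/cvgrPdist_le => e e0; near=> N.
  have hN : (2 <= N)%N by near: N; exact: nbhs_infty_ge.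
  have hNe : (2 * e)^-1 <= N%:R by near: N; exact: nbhs_infty_ger.
  have Npos : (0 : R) < N%:R by rewrite ltr0n (leq_trans _ hN).
  have h1 : 1 <= 2 * e * N%:R.
    have := ler_wpM2l (ltW (mulr_gt0 (ltr0Sn R 1) e0)) hNe.
    by rewrite mulfV // gt_eqF // mulr_gt0.
  have -> : (2^-1 : R)%:M - N%:R^-1 *: (X N *m (X N)^T) =
      N%:R^-1 *: - (X N *m (X N)^T - (N%:R / 2 : R)%:M).
    rewrite scalerN scalerBr opprB scale_scalar_mx; congr (_ - _); congr (_%:M).
    by field; rewrite gt_eqF.
  rewrite normrZ normrN ger0_norm ?invr_ge0 ?ler0n //.
  apply: le_trans (ler_wpM2l _ (B N hN)) _; first by rewrite invr_ge0 ler0n.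
  by rewrite mulrC ler_pdivrMr //; nra.
- apply/eqoP => e e0; near=> N.
  have hN : (2 <= N)%N by near: N; exact: nbhs_infty_ge.
  have hNe : (2 * e)^-1 <= N%:R by near: N; exact: nbhs_infty_ger.
  have Npos : (0 : R) < N%:R by rewrite ltr0n (leq_trans _ hN).
  have h1 : 1 <= 2 * e * N%:R.
    have := ler_wpM2l (ltW (mulr_gt0 (ltr0Sn R 1) e0)) hNe.
    by rewrite mulfV // gt_eqF // mulr_gt0.
  apply: le_trans (B N hN) _.
  rewrite normr_nat; nra.
Unshelve. all: by end_near.
Qed.
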